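(* For all ordered graphs $G_1$ and $G_2$, $$r_o(G_1,G_2)\;\ge\;\frac14\min\Big\{\Delta^-(G_1)\big(\Delta^-(G_1)-1\big),\ \Delta^+(G_2)\big(\Delta^+(G_2)-1\big)\Big\}.$$
   Context: An ordered graph $G$ on $n$ vertices has vertex set $[n]=\{1,\dots,n\}$ with the natural linear order. An ordered graph $G$ on $[n]$ is contained in an ordered graph $H$ on a linearly ordered vertex set if there is an injective map $f$ from $[n]$ to $V(H)$ with $f(i)<f(j)$ whenever $i<j$ and $f(i)f(j)\in E(H)$ whenever $ij\in E(G)$; such an image is an ordered copy of $G$. For a vertex $v$ of an ordered graph, the left degree $d^-(v)$ is the number of neighbors $u$ of $v$ with $u<v$, and the right degree $d^+(v)$ is the number of neighbors $u$ with $u>v$; $\Delta^-(G)$ and $\Delta^+(G)$ denote the maxima of $d^-$ and $d^+$ over $V(G)$. The online ordered Ramsey game for $(G_1,G_2)$ is played by Builder and Painter on the vertex set $\mathbb N$ with its natural order. On each turn Builder selects a previously unselected pair of vertices (an edge) and Painter then colors it red or blue. Builder wins as soon as the colored edges contain an ordered red copy of $G_1$ or an ordered blue copy of $G_2$; Builder tries to minimize and Painter tries to maximize the number of turns. The online ordered Ramsey number $r_o(G_1,G_2)$ is the number of turns after which Builder wins when both players play optimally. *)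

(* Defs.v *)
From mathcomp Require Import all_boot all_order.
Set Implicit Arguments. Unset Strict Implicit. Unset Printing Implicit Defensive.

(* An ordered graph on [n] (represented by 'I_n = {0,...,n-1} with its natural
   order) is given by a symmetric irreflexive adjacency relation. *)
Definition simple_graph (n : nat) (e : rel 'I_n) : Prop :=
  symmetric e /\ irreflexive e.

Definition ldeg (n : nat) (e : rel 'I_n) (v : 'I_n) : nat :=
  #|[set u : 'I_n | (u < v) && e u v]|.
Definition rdeg (n : nat) (e : rel 'I_n) (v : 'I_n) : nat :=
  #|[set u : 'I_n | (v < u) && e v u]|.

Definition Delta_minus (n : nat) (e : rel 'I_n) : nat := \max_(v : 'I_n) ldeg e v.
Definition Delta_plus (n : nat) (e : rel 'I_n) : nat := \max_(v : 'I_n) rdeg e v.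

(* A board position of the game on vertex set nat: the list of edges selected
   so far, each edge {u,v} stored as (u, v, c) with u < v and colour c
   (true = red, false = blue). *)
Definition board := seq (nat * nat * bool).

Definition has_copy (n : nat) (e : rel 'I_n) (c : bool) (P : board) : Prop :=
  exists f : 'I_n -> nat,
    (forall i j : 'I_n, i < j -> f i < f j) /\
    (forall i j : 'I_n, i < j -> e i j -> (f i, f j, c) \in P).

Definition builder_won n1 (e1 : rel 'I_n1) n2 (e2 : rel 'I_n2) (P : board) : Prop :=
  has_copy e1 true P \/ has_copy e2 false P.

Inductive builder_wins_within n1 (e1 : rel 'I_n1) n2 (e2 : rel 'I_n2)
  : nat -> board -> Prop :=
| bw_done k P : builder_won e1 e2 P -> builder_wins_within e1 e2 k P
| bw_step k P u v :
    u < v ->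
    (forall c, (u, v, c) \notin P) ->
    (forall c : bool, builder_wins_within e1 e2 k ((u, v, c) :: P)) ->
    builder_wins_within e1 e2 k.+1 P.

(* Main.v *)
Require Import Defs.
From mathcomp Require Import all_boot all_order.
From mathcomp Require Import zify.

Definition redin (w : nat) (P : board) : nat :=
  count (fun t : nat * nat * bool => (t.1.2 == w) && t.2) P.

Lemma red_bound n (e : rel 'I_n) (P : board) (f : 'I_n -> nat) :
  (forall i j : 'I_n, i < j -> f i < f j) ->
  (forall i j : 'I_n, i < j -> e i j -> (f i, f j, true) \in P) ->
  forall v, ldeg e v <= redin (f v) P.
Proof.
move=> fmono fe v.
rewrite /ldeg /redin -size_filter cardE -(size_map (fun u => (f u, f v, true))).
apply: uniq_leq_size.
- rewrite map_inj_in_uniq ?enum_uniq // => x y _ _ [] fxy.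
  case: (ltngtP x y) => [xy|yx|/val_inj //].
  + by have := fmono _ _ xy; rewrite fxy ltnn.
  + by have := fmono _ _ yx; rewrite fxy ltnn.
- move=> t /mapP[x]; rewrite mem_enum inE => /andP[xv exv] ->.
  by rewrite mem_filter /= eqxx; apply: fe.
Qed.

Lemma count_sum (T : Type) (h : T -> nat) (W : seq nat) (P : seq T) a :
  uniq W -> (forall w, w \in W -> a <= count (fun t => h t == w) P) ->
  size W * a <= size P.
Proof.
elim: W P => [|w W IH] P //= /andP[wW uW] Hc.
rewrite -(count_predC (fun t => h t == w) P) mulSn.
apply: leq_add; first by apply: Hc; rewrite inE eqxx.
rewrite -size_filter; apply: IH => // w' w'W.
rewrite count_filter.
have -> : count (predI (fun t => h t == w') (fun t => ~~ (h t == w))) P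
          = count (fun t => h t == w') P.
  apply: eq_count => t /=.
  case E: (h t == w') => //=; apply/negP => /eqP Ew.
  by move/eqP: E; rewrite Ew => Eww; move: wW; rewrite Eww w'W.
by apply: Hc; rewrite inE w'W orbT.
Qed.

Lemma count_split (P : board) w :
  count (fun t : nat * nat * bool => t.1.2 == w) P =
  redin w P + count (fun t : nat * nat * bool => (t.1.2 == w) && ~~ t.2) P.
Proof.
rewrite /redin; elim: P => //= t P ->.
by case: (t.1.2 == w); case: t.2 => /=; lia.
Qed.

Lemma blue_bound n (e : rel 'I_n) (P : board) (f : 'I_n -> nat) a :
  (forall i j : 'I_n, i < j -> f i < f j) ->
  (forall i j : 'I_n, i < j -> e i j -> (f i, f j, false) \in P) ->
  0 < a -> (forall u y, (u, y, false) \in P -> a.-1 <= redin y P) ->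
  forall x, rdeg e x * a <= size P.
Proof.
move=> fmono fe a0 inv x.
have -> : rdeg e x = size (map f (enum [set y : 'I_n | (x < y) && e x y])).
  by rewrite size_map /rdeg cardE.
apply: (@count_sum (nat * nat * bool) (fun t => t.1.2) _ P a).
- rewrite map_inj_in_uniq ?enum_uniq // => y z _ _ /= fyz.
  case: (ltngtP y z) => [yz|zy|/val_inj //].
  + by have := fmono _ _ yz; rewrite fyz ltnn.
  + by have := fmono _ _ zy; rewrite fyz ltnn.
- move=> w /mapP[y]; rewrite mem_enum inE => /andP[xy exy] ->.
  have H := fe _ _ xy exy.
  have H1 := inv _ _ H.
  rewrite count_split.
  have : 0 < count (fun t : nat * nat * bool => (t.1.2 == f y) && ~~ t.2) P.
    by rewrite -has_count; apply/hasP; exists (f x, f y, false) => //=; rewrite eqxx.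
  lia.
Qed.

Lemma main_lemma n1 (e1 : rel 'I_n1) n2 (e2 : rel 'I_n2) k P :
  0 < Delta_minus e1 -> 0 < Delta_plus e2 ->
  builder_wins_within e1 e2 k P ->
  (forall w, redin w P <= (Delta_minus e1).-1) ->
  (forall u y, (u, y, false) \in P -> (Delta_minus e1).-1 <= redin y P) ->
  Delta_minus e1 * Delta_plus e2 <= k + size P.
Proof.
set a := Delta_minus e1; set b := Delta_plus e2.
move=> a0 b0 H; elim: H => {k P} [k P [[f [fm fe]]|[f [fm fe]]] | k P u v uv fr _ IH] I1 I2.
- have : a <= a.-1.
    rewrite {1}/a /Delta_minus; apply/bigmax_leqP => i _.
    exact: (leq_trans (red_bound _ _ _ _ fm fe i) (I1 _)).
  lia.
- have : b <= size P %/ a.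
    apply/bigmax_leqP => i _.
    by rewrite leq_divRL //; apply: (blue_bound _ _ _ _ _ fm fe a0 I2 i).
  rewrite leq_divRL // mulnC => Hb; exact: leq_trans Hb (leq_addl _ _).
- set c := redin v P < a.-1.
  have := IH c.
  rewrite /= addSnnS; apply.
  + move=> w; rewrite /redin /=; rewrite -/(redin w P).
    case: (eqVneq v w) => [<-|_] /=; last by apply: I1.
    rewrite /c; case E: (redin v P < a.-1) => /=; first by lia.
    exact: I1.
  + move=> u' y; rewrite inE => /orP[/eqP [_ -> Ec]|Hin].
    * rewrite /redin /= -/(redin v P) eqxx /= -Ec.
    * move: Ec; rewrite /c => Ec; rewrite add0n.
      have : ~~ (redin v P < a.-1) by rewrite -Ec.
      lia.
    * rewrite /redin /= -/(redin y P).
      have := I2 _ _ Hin; lia.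
Qed.

Theorem theorem3 (n1 : nat) (e1 : rel 'I_n1) (n2 : nat) (e2 : rel 'I_n2) :
  simple_graph e1 -> simple_graph e2 ->
  forall k : nat, builder_wins_within e1 e2 k [::] ->
  minn (Delta_minus e1 * (Delta_minus e1).-1)
       (Delta_plus e2 * (Delta_plus e2).-1) <= 4 * k.
Proof.
move=> _ _ k H.
case: (posnP (Delta_minus e1)) => [->|a0]; first by rewrite mul0n min0n.
case: (posnP (Delta_plus e2)) => [->|b0]; first by rewrite mul0n minn0.
have := main_lemma _ _ _ _ _ _ a0 b0 H (fun w => leq0n _) (fun u y (h : (u, y, false) \in [::]) => match notF h with end).
rewrite /= addn0 => Hab.
have Hm : minn (Delta_minus e1 * (Delta_minus e1).-1)
       (Delta_plus e2 * (Delta_plus e2).-1) <= Delta_minus e1 * Delta_plus e2.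
  case: (leqP (Delta_minus e1) (Delta_plus e2)) => Hle.
  - apply: leq_trans (geq_minl _ _) _; apply: leq_mul => //.
    exact: leq_trans (leq_pred _) Hle.
  - apply: leq_trans (geq_minr _ _) _; rewrite mulnC; apply: leq_mul => //.
    exact: leq_trans (leq_pred _) (ltnW Hle).
lia.
Qed.
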